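(* Let $V$ be an $n$-dimensional vector space over a field of characteristic zero, $n\neq 4$, and let $A^{ab}$ and $B_{ab}$ be 2-forms with $\operatorname{rank}A\leq 4$. Let $T=T^a{}_b\{A,B\}=A^{ac}B_{bc}-\frac14 A^{cd}B_{cd}\delta^a_b$. Then $$\Bigl(T^2-\frac14[T^2]+\frac{1}{4(n-4)}[T]^2\Bigr)\Bigl(T-\frac{1}{n-4}[T]\Bigr)=0.$$
   Context: Index-free notation for $(1,1)$-tensors: products denote composition, $[X]=X^c{}_c$ is the trace, and a scalar term is understood as multiplied by the identity $\delta^a_b$. The rank of a 2-form $A^{ab}$ is the dimension of the subspace spanned by the vectors $A^{ab}\omega_b$ as $\omega$ ranges over the dual space (equivalently the least number of linearly independent vectors needed to construct $A$). No metric is assumed. *)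

(* Defs.v *)
From HB Require Import structures.
From mathcomp Require Import all_boot all_order all_algebra.
Set Implicit Arguments. Unset Strict Implicit. Unset Printing Implicit Defensive.
Import GRing.Theory.
Local Open Scope ring_scope.

(* V = F^n with a fixed basis; a (1,1)-tensor X^a_b is a matrix X a b
   (row a = upper index, column b = lower index); composition is *m,
   trace is \tr, a scalar s stands for s%:M (s times delta^a_b).
   A 2-form A^{ab} (contravariant) is a matrix A with A^T = -A; likewise
   B_{ab} (covariant). *)

Definition antisym (F : fieldType) (n : nat) (A : 'M[F]_n) : Prop := A^T = - A.

Definition contr2 (F : fieldType) (n : nat) (A B : 'M[F]_n) : F :=
  \sum_(c < n) \sum_(d < n) A c d * B c d.

Definition tensorT (F : fieldType) (n : nat) (A B : 'M[F]_n) : 'M[F]_n :=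
  \matrix_(a < n, b < n) (\sum_(c < n) A a c * B b c)
  - (4%:R^-1 * contr2 A B)%:M.

(* Main.v *)
Require Import Defs.
From HB Require Import structures.
From mathcomp Require Import all_boot all_order all_algebra ring.
Import GRing.Theory.
Local Open Scope ring_scope.


Section F4.
Variable R : comNzRingType.
Definition skf (a b c d e f : R) (i j : nat) : R :=
   match i, j with
   | 0, 1 => a | 1, 0 => -a
   | 0, 2 => b | 2, 0 => -b
   | 0, 3 => c | 3, 0 => -c
   | 1, 2 => d | 2, 1 => -d
   | 1, 3 => e | 3, 1 => -e
   | 2, 3 => f | 3, 2 => -f
   | _, _ => 0 end.
Definition mm (f g : nat -> nat -> R) (i j : nat) : R :=
  f i 0%N * g 0%N j + f i 1%N * g 1%N j + f i 2%N * g 2%N j + f i 3%N * g 3%N j.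
Definition tr4 (f : nat -> nat -> R) : R := f 0%N 0%N + f 1%N 1%N + f 2%N 2%N + f 3%N 3%N.

Lemma keyf (a b c d e f a' b' c' d' e' f' : R) (i j : nat) : (i < 4)%N -> (j < 4)%N ->
  let p := mm (skf a b c d e f) (skf a' b' c' d' e' f') in
  8%:R * mm p p i j - 4%:R * tr4 p * p i j + (tr4 p ^+ 2 - 2%:R * tr4 (mm p p)) *+ (i == j) = 0.
Proof.
move=> Hi Hj p.
case: i Hi => [|[|[|[|i]]]] // _; case: j Hj => [|[|[|[|j]]]] // _;
 rewrite /p /tr4 /mm /skf /=; ring.
Qed.

Lemma keyg (s n p : nat -> nat -> R)
  (hs : forall a b, (a < 4)%N -> (b < 4)%N ->
     s a b = skf (s 0%N 1%N) (s 0%N 2%N) (s 0%N 3%N) (s 1%N 2%N) (s 1%N 3%N) (s 2%N 3%N) a b)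
  (hn : forall a b, (a < 4)%N -> (b < 4)%N ->
     n a b = skf (n 0%N 1%N) (n 0%N 2%N) (n 0%N 3%N) (n 1%N 2%N) (n 1%N 3%N) (n 2%N 3%N) a b)
  (hp : forall a b, p a b = mm s n a b) (i j : nat) : (i < 4)%N -> (j < 4)%N ->
  8%:R * mm p p i j - 4%:R * tr4 p * p i j + (tr4 p ^+ 2 - 2%:R * tr4 (mm p p)) *+ (i == j) = 0.
Proof.
move=> Hi Hj.
have agree : forall a b, (a < 4)%N -> (b < 4)%N -> p a b =
   mm (skf (s 0%N 1%N) (s 0%N 2%N) (s 0%N 3%N) (s 1%N 2%N) (s 1%N 3%N) (s 2%N 3%N))
      (skf (n 0%N 1%N) (n 0%N 2%N) (n 0%N 3%N) (n 1%N 2%N) (n 1%N 3%N) (n 2%N 3%N)) a b.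
  move=> a b ha hb; rewrite hp /mm (hs a 0%N) // (hs a 1%N) // (hs a 2%N) // (hs a 3%N) //.
  by rewrite (hn 0%N b) // (hn 1%N b) // (hn 2%N b) // (hn 3%N b).
rewrite /mm /tr4 !agree //.
have H := keyf (s 0%N 1%N) (s 0%N 2%N) (s 0%N 3%N) (s 1%N 2%N) (s 1%N 3%N) (s 2%N 3%N)
  (n 0%N 1%N) (n 0%N 2%N) (n 0%N 3%N) (n 1%N 2%N) (n 1%N 3%N) (n 2%N 3%N) i j Hi Hj.
cbv zeta in H; rewrite /mm /tr4 in H; exact H.
Qed.

Definition fo (A : 'M[R]_4) := fun a b : nat => A (inord a) (inord b).

Lemma mulE (A B : 'M[R]_4) a b : (A *m B) (inord a) (inord b) = mm (fo A) (fo B) a b.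
Proof.
rewrite mxE (eq_bigr (fun k : 'I_4 => A (inord a) (inord k) * B (inord k) (inord b))); last first.
  by move=> k _; rewrite inord_val.
rewrite -(big_mkord xpredT (fun k => A (inord a) (inord k) * B (inord k) (inord b))).
rewrite unlock /= /mm /fo; ring.
Qed.

Lemma trE (A : 'M[R]_4) : \tr A = tr4 (fo A).
Proof.
rewrite /mxtrace (eq_bigr (fun k : 'I_4 => A (inord k) (inord k))); last first.
  by move=> k _; rewrite inord_val.
rewrite -(big_mkord xpredT (fun k => A (inord k) (inord k))).
rewrite unlock /= /tr4 /fo; ring.
Qed.
End F4.
Arguments fo {R}. Arguments skf {R}. Arguments mm {R}. Arguments tr4 {R}. Arguments keyg {R}. Arguments mulE {R}. Arguments trE {R}.

Lemma skewE (F : fieldType) (S : 'M[F]_4) : (2%:R : F) != 0 -> S^T = - S ->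
  forall a b, (a < 4)%N -> (b < 4)%N ->
  fo S a b = skf (fo S 0%N 1%N) (fo S 0%N 2%N) (fo S 0%N 3%N) (fo S 1%N 2%N) (fo S 1%N 3%N) (fo S 2%N 3%N) a b.
Proof.
move=> h2 hS.
have hs : forall i j, S j i = - S i j.
  by move=> i j; have := congr1 (fun X : 'M[F]_4 => X i j) hS; rewrite !mxE.
have hd : forall i, S i i = 0.
  move=> i; have h : S i i *+ 2 = 0 by rewrite mulr2n {1}hs addNr.
  by move: h; rewrite -mulr_natr => /eqP; rewrite mulf_eq0 (negbTE h2) orbF => /eqP.
move=> a b.
case: a => [|[|[|[|a]]]] // _; case: b => [|[|[|[|b]]]] // _; rewrite /skf /fo /=;
  try done; try (by rewrite hd); by rewrite hs.
Qed.

Lemma key_mx (F : fieldType) (S N : 'M[F]_4) : (2%:R : F) != 0 -> S^T = - S -> N^T = - N ->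
  let P := S *m N in
  8%:R *: (P *m P) - (4%:R * \tr P) *: P + (\tr P ^+ 2 - 2%:R * \tr (P *m P))%:M = 0.
Proof.
move=> h2 hS hN P; apply/matrixP => i j.
have e1 : (\sum_k P i k * P k j) = mm (fo P) (fo P) i j by rewrite -mulE !inord_val mxE.
have e2 : (\sum_k S i k * N k j) = fo P i j by rewrite /fo !inord_val /P mxE.
have e3 : \tr (P *m P) = tr4 (mm (fo P) (fo P)) by rewrite trE /tr4 /fo !mulE.
rewrite e3 !mxE e1 e2 trE -val_eqE.
have hp : forall a b, fo P a b = mm (fo S) (fo N) a b by move=> a b; rewrite /fo /P mulE.
have H := (keyg (fo S) (fo N) (fo P) (skewE _ S h2 hS) (skewE _ N h2 hN) hp (val i) (val j) (ltn_ord i) (ltn_ord j)). exact H.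
Qed.


Lemma finish (F : fieldType) (n' : nat) (M : 'M[F]_n'.+1) (kk : F) :
  (2%:R : F) != 0 -> (4%:R : F) != 0 -> (8%:R : F) != 0 -> kk = n'.+1%:R - 4%:R -> kk != 0 ->
  8%:R *: (M *m M *m M) - (4%:R * \tr M) *: (M *m M) + (\tr M ^+ 2 - 2%:R * \tr (M *m M)) *: M = 0 ->
  let T := M - (4%:R^-1 * \tr M)%:M in
  (T *m T - (4%:R^-1 * \tr (T *m T))%:M + ((4%:R * kk)^-1 * \tr T ^+ 2)%:M)
    *m (T - (kk^-1 * \tr T)%:M) = 0.
Proof.
move=> h2 h4 h8 ekk hk Z T.
set t := \tr M in Z T *; set s := \tr (M *m M) in Z *.
set a := 4%:R^-1 * t in T *.
have hX : (horner_mx M) 'X = M by exact: horner_mx_X.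
have hC : forall c, (horner_mx M) c%:P = c%:M by move=> c; exact: horner_mx_C.
have eT : T = (horner_mx M) ('X - a%:P) by rewrite rmorphB /= hX hC.
have eTT : T *m T = (horner_mx M) ('X * 'X - (2%:R * a)%:P * 'X + (a ^+ 2)%:P).
  rewrite eT mulmxE -rmorphM; congr ((horner_mx M) _).
  ring.
have tT : \tr T = t - a * n'.+1%:R by rewrite /T raddfB /= mxtrace_scalar mulr_natr.
have eTTm : T *m T = M *m M - (2%:R * a) *: M + (a ^+ 2)%:M.
  rewrite /T mulmxBl !mulmxBr mul_mx_scalar mul_scalar_mx -scalar_mxM.
  apply/matrixP => i j; rewrite !mxE; ring.
have tTT : \tr (T *m T) = s - 2%:R * a * t + a ^+ 2 * n'.+1%:R.
  by rewrite eTTm raddfD raddfB /= mxtrace_scalar mxtraceZ mulr_natr.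
rewrite tTT tT eTT eT.
set b := 4%:R^-1 * _. set d := (4%:R * kk)^-1 * _. set e := kk^-1 * _.
have he : e = - a.
  rewrite /e /a ekk; rewrite ekk in hk; field; by rewrite h4 nat1r hk.
have hb : b = a ^+ 2 + d - (8%:R^-1 * t ^+ 2 - 4%:R^-1 * s).
  rewrite /b /d /a ekk; rewrite ekk in hk; field; by rewrite h4 h8 nat1r hk.
pose Q := ('X * 'X - (2%:R * a)%:P * 'X + (a ^+ 2)%:P - b%:P + d%:P) * ('X - a%:P - e%:P).
pose c := 8%:R^-1 * t ^+ 2 - 4%:R^-1 * s.
have hZg : forall c1 c2 c3 : F, horner_mx M (c1%:P * ('X * 'X * 'X) - c2%:P * ('X * 'X) + c3%:P * 'X)
     = c1 *: (M *m M *m M) - c2 *: (M *m M) + c3 *: M.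
  move=> c1 c2 c3; rewrite !(rmorphB, rmorphD, rmorphM) /= hX !hC.
  by rewrite -!mulmxE !mul_scalar_mx.
have hZ : horner_mx M (1%:P * ('X * 'X * 'X) - (2%:R * a)%:P * ('X * 'X) + c%:P * 'X) = 0.
  rewrite hZg.
  have := congr1 (fun X => 8%:R^-1 *: X) Z; rewrite scaler0 => <-.
  rewrite !(scalerDr, scalerN, scalerBr) !scalerA.
  have -> : 8%:R^-1 * 8%:R = 1 :> F by rewrite mulVf.
  have -> : 8%:R^-1 * (4%:R * t) = 2%:R * a :> F by rewrite /a; field; rewrite h8 h4.
  have -> : 8%:R^-1 * (t ^+ 2 - 2%:R * s) = c :> F by rewrite /c; field; rewrite h8 h4.
  done.
have Hm : forall (p q : {poly F}) (x y z : F), horner_mx M ((p - x%:P + y%:P) * (q - z%:P)) =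
    (horner_mx M p - x%:M + y%:M) *m (horner_mx M q - z%:M).
  by move=> p q x y z; rewrite rmorphM !(rmorphB, rmorphD) /= !hC mulmxE.
rewrite -Hm he hb -/c -[X in _ = X]hZ; congr (horner_mx M _).
ring.
Qed.


Theorem theorem5 (F : fieldType) (n : nat) (A B : 'M[F]_n) :
  [pchar F] =i pred0 ->
  n <> 4%N ->
  antisym A -> antisym B ->
  (\rank A <= 4)%N ->
  let T := tensorT A B in
  let k : F := n%:R - 4%:R in
  (T *m T - (4%:R^-1 * \tr (T *m T))%:M + ((4%:R * k)^-1 * \tr T ^+ 2)%:M)
    *m (T - (k^-1 * \tr T)%:M) = 0.
Proof.
case: n A B => [|n'] A B.
  by move=> *; apply/matrixP => -[].
move=> hchar hn4 hA hB hrk T k.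
rewrite /T /k {T k}.
have hnat := (pcharf0P F).1 hchar.
have h2 : (2%:R : F) != 0 by rewrite hnat.
have h4 : (4%:R : F) != 0 by rewrite hnat.
have h8 : (8%:R : F) != 0 by rewrite hnat.
have hk : (n'.+1%:R - 4%:R : F) != 0.
  case: (leqP 4 n'.+1) => h.
    rewrite -natrB // hnat subn_eq0; apply/negP => h'; apply: hn4; apply/eqP.
    by rewrite eqn_leq h h'.
  rewrite -opprB -natrB ?(ltnW h) // oppr_eq0 hnat subn_eq0 -ltnNge h.
  done.
set r := \rank A.
pose C := col_ebase A *m (pid_mx 4 : 'M_(n'.+1,4)).
pose Y := (pid_mx r : 'M_(4,n'.+1)) *m row_ebase A.
have eCY : A = C *m Y.
  by rewrite /C /Y mulmxA -(mulmxA (col_ebase A)) mul_pid_mx !(minn_idPr hrk) mulmx_ebase.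
clearbody Y C.
have sAY : (A <= Y)%MS by rewrite {1}eCY submxMl.
have e1 := mulmxKpV sAY.
pose D := - (C^T *m pinvmx Y).
have hAT : A = - A^T by rewrite hA opprK.
have eA : A = Y^T *m D *m Y.
  rewrite -{1}e1; congr (_ *m Y).
  rewrite {1}hAT {1}eCY trmx_mul /D.
  by rewrite mulNmx mulmxN (mulmxA Y^T).
clearbody D.
pose S := (2%:R^-1 : F) *: (D - D^T).
have hS : S^T = - S.
  by apply/matrixP => i j; rewrite !mxE -mulrN opprB.
have eAS : A = Y^T *m S *m Y.
  have hAT' : Y^T *m D^T *m Y = - A.
    by rewrite -hA {1}eA !trmx_mul trmxK mulmxA.
  rewrite /S -scalemxAr -scalemxAl mulmxBr mulmxBl -eA hAT' opprK.
  by rewrite -mulr2n -scaler_nat scalerA mulVf // scale1r.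
pose M := A *m B^T.
have eT : tensorT A B = M - (4%:R^-1 * \tr M)%:M.
  rewrite /tensorT; congr (_ - (_ * _)%:M).
    by apply/matrixP => a b; rewrite !mxE; apply: eq_bigr => c _; rewrite mxE.
  by rewrite /contr2 /mxtrace; apply: eq_bigr => c _; rewrite mxE; apply: eq_bigr => d _; rewrite mxE.
have hBT : B^T = - B by [].
pose N := Y *m B^T *m Y^T.
have hN : N^T = - N by rewrite /N !trmx_mul !trmxK hB mulmxN mulNmx opprK mulmxA.
pose W := S *m Y *m B^T.
pose P := S *m N.
have eM : M = Y^T *m W by rewrite /M eAS /W !mulmxA.
have eWY : W *m Y^T = P by rewrite /W /P /N !mulmxA.
have K := key_mx F S N h2 hS hN; rewrite -/P in K.
clearbody W P M.
have eM2 : M *m M = Y^T *m P *m W.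
  by rewrite eM -mulmxA (mulmxA W) eWY mulmxA.
have eM3 : M *m M *m M = Y^T *m (P *m P) *m W.
  by rewrite eM2 eM -!mulmxA (mulmxA W) eWY.
have tM : \tr M = \tr P by rewrite eM mxtrace_mulC eWY.
have tM2 : \tr (M *m M) = \tr (P *m P) by rewrite eM2 mxtrace_mulC mulmxA eWY.
have Z : 8%:R *: (M *m M *m M) - (4%:R * \tr M) *: (M *m M) + (\tr M ^+ 2 - 2%:R * \tr (M *m M)) *: M = 0.
  have := congr1 (fun X => Y^T *m X *m W) K.
  rewrite /= mulmx0 mul0mx mulmxDr mulmxBr mulmxDl mulmxBl -!scalemxAr -!scalemxAl.
  by rewrite mul_mx_scalar -!scalemxAl -eM -eM2 -eM3 tM tM2.
clear K eM eM2 eM3 tM tM2 eWY.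
rewrite eT.
have := finish F n' M (n'.+1%:R - 4%:R) h2 h4 h8 erefl hk Z.
by [].
Qed.
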